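(* Let $A\in\mathbb{M}_n$ and let $\Omega$ be any region contained in $\mathbb{C}\setminus\sigma(A)$. Then for all $z\in\Omega$, \[s_1(R_A(z))<\sup_{\zeta\in\Omega}s_1(R_A(\zeta))\quad\text{and}\quad s_n(R_A(z))>\inf_{\zeta\in\Omega}s_n(R_A(\zeta)).\] In particular, the functions $z\mapsto s_1(R_A(z))$ and $z\mapsto s_n(R_A(z))$ are nonconstant on $\Omega$.
   Context: $\mathbb{M}_n$ is the set of $n\times n$ complex matrices, $\sigma(A)$ is the spectrum (set of eigenvalues) of $A$, and $R_A(z)=(A-zI)^{-1}$ for $z\in\mathbb{C}\setminus\sigma(A)$ is the resolvent. A region is a nonempty open connected subset of $\mathbb{C}$. For $B\in\mathbb{M}_n$, the singular values $s_1(B)\geq\cdots\geq s_n(B)$ are the nonnegative square roots of the eigenvalues of $B^*B$ in nonincreasing order. *)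

(* Defs.v *)
From HB Require Import structures.
From mathcomp Require Import all_boot all_order all_algebra.
From mathcomp Require Import all_classical all_reals all_analysis.
From mathcomp Require Export complex.
Import Order.TTheory GRing.Theory Num.Theory.
Import numFieldNormedType.Exports numFieldTopology.Exports.
Set Implicit Arguments. Unset Strict Implicit. Unset Printing Implicit Defensive.
Local Open Scope ring_scope.
Local Open Scope classical_set_scope.
Local Open Scope complex_scope.

(* The metric/topological structure on R[i] induced by its norm (the complex
   modulus), as for any numFieldType (cf. numFieldTopology). *)
#[export] HB.instance Definition _ (R : rcfType) :=
  PseudoPointedMetric.copy R[i] R[i]^o.

Definition adjmx (R : rcfType) n (B : 'M[R[i]]_n) : 'M[R[i]]_n :=
  (map_mx conjc B)^T.

Definition spectrum (R : rcfType) n (A : 'M[R[i]]_n) : set R[i] :=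
  [set z | eigenvalue A z].

Definition resolvent (R : rcfType) n (A : 'M[R[i]]_n) (z : R[i]) : 'M[R[i]]_n :=
  invmx (A - z%:M).

(* eigenvalues of B^* B (all real and nonnegative, B^*B being psd) *)
Definition gram_eigs (R : realType) n (B : 'M[R[i]]_n) : set R :=
  [set x : R | eigenvalue (adjmx B *m B) x%:C].

Definition s_first (R : realType) n (B : 'M[R[i]]_n) : R :=
  Num.sqrt (sup (gram_eigs B)).

Definition s_last (R : realType) n (B : 'M[R[i]]_n) : R :=
  Num.sqrt (inf (gram_eigs B)).

Definition region (R : realType) (O : set R[i]) : Prop :=
  O !=set0 /\ open O /\ connected O.

(* Main.v *)
Require Import Defs.
Set Warnings "-all".
From HB Require Import structures.
From mathcomp Require Import all_boot all_order all_algebra.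
From mathcomp Require Import all_classical all_reals all_analysis.
From mathcomp Require Import complex.
From mathcomp Require Import ring lra.
Import Order.TTheory GRing.Theory Num.Theory.
Import numFieldNormedType.Exports numFieldTopology.Exports.
Local Open Scope ring_scope.
Local Open Scope classical_set_scope.
Local Open Scope complex_scope.
Set Implicit Arguments. Unset Strict Implicit. Unset Printing Implicit Defensive.
Section Aux.
Variable R : realType.
Local Notation C := (R[i]).

Definition ctm m n (M : 'M[C]_(m, n)) : 'M[C]_(n, m) := (map_mx (@conjc R) M)^T.

Lemma ctm_tstar m n (M : 'M[C]_(m, n)) : ctm M = map_mx Num.conj (trmx M).
Proof. by rewrite /ctm map_trmx. Qed.

Lemma ctmK m n (M : 'M[C]_(m, n)) : ctm (ctm M) = M.
Proof. by apply/matrixP=> i j; rewrite !mxE conjcK. Qed.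

Lemma ctmM m n p (A : 'M[C]_(m, n)) (B : 'M[C]_(n, p)) :
  ctm (A *m B) = ctm B *m ctm A.
Proof. by rewrite /ctm map_mxM trmx_mul. Qed.

Lemma ctmD m n (A B : 'M[C]_(m, n)) : ctm (A + B) = ctm A + ctm B.
Proof. by apply/matrixP=> i j; rewrite !mxE rmorphD. Qed.

Lemma ctmN m n (A : 'M[C]_(m, n)) : ctm (- A) = - ctm A.
Proof. by apply/matrixP=> i j; rewrite !mxE rmorphN. Qed.

Lemma ctmB m n (A B : 'M[C]_(m, n)) : ctm (A - B) = ctm A - ctm B.
Proof. by rewrite ctmD ctmN. Qed.

Lemma ctmZ m n k (A : 'M[C]_(m, n)) : ctm (k *: A) = (conjc k) *: ctm A.
Proof. by apply/matrixP=> i j; rewrite !mxE rmorphM. Qed.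

Lemma ctm_scalar n k : ctm (k%:M : 'M[C]_n) = (conjc k)%:M.
Proof.
apply/matrixP=> i j; rewrite !mxE eq_sym.
by rewrite rmorphMn.
Qed.

Lemma ctm1 n : ctm (1%:M : 'M[C]_n) = 1%:M.
Proof. by rewrite ctm_scalar conjc1. Qed.

Lemma adjmxE n (B : 'M[C]_n) : adjmx B = ctm B.
Proof. by []. Qed.

Definition dot n (a b : 'rV[C]_n) : C := (a *m ctm b) 0 0.
Definition nrm2 n (a : 'rV[C]_n) : C := dot a a.

Lemma dotDl n (a b c : 'rV[C]_n) : dot (a + b) c = dot a c + dot b c.
Proof. by rewrite /dot mulmxDl mxE. Qed.
Lemma dotDr n (a b c : 'rV[C]_n) : dot a (b + c) = dot a b + dot a c.
Proof. by rewrite /dot ctmD mulmxDr mxE. Qed.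
Lemma dotZl n k (a b : 'rV[C]_n) : dot (k *: a) b = k * dot a b.
Proof. by rewrite /dot -scalemxAl mxE. Qed.
Lemma dotZr n k (a b : 'rV[C]_n) : dot a (k *: b) = conjc k * dot a b.
Proof. by rewrite /dot ctmZ -scalemxAr mxE. Qed.
Lemma dot_mulmx n m (a : 'rV[C]_n) (M : 'M[C]_(n, m)) b :
  dot (a *m M) b = dot a (b *m ctm M).
Proof. by rewrite /dot ctmM ctmK mulmxA. Qed.

Lemma mul_ctm_diag m n (M : 'M[C]_(m, n)) i :
  (M *m ctm M) i i = \sum_k `|M i k| ^+ 2.
Proof.
rewrite mxE; apply: eq_bigr => k _; rewrite !mxE sqr_normc //.
Qed.

Lemma mul_ctm_ge0 m n (M : 'M[C]_(m, n)) i : 0 <= (M *m ctm M) i i.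
Proof. by rewrite mul_ctm_diag; apply: sumr_ge0 => k _; rewrite exprn_ge0. Qed.

Lemma nrm2_ge0 n (a : 'rV[C]_n) : 0 <= nrm2 a.
Proof. exact: mul_ctm_ge0. Qed.

Lemma nrm2_eq0 n (a : 'rV[C]_n) : nrm2 a = 0 -> a = 0.
Proof.
rewrite /nrm2 /dot mul_ctm_diag => /eqP; rewrite psumr_eq0 => [/allP H|k _].
  apply/rowP => k; rewrite mxE; apply/eqP.
  by have := H k (mem_index_enum k); rewrite /= sqrf_eq0 normr_eq0.
by rewrite exprn_ge0.
Qed.

Lemma nrm2_expand n (a b : 'rV[C]_n) k :
  nrm2 (a + k *: b) =
  nrm2 a + k * dot b a + conjc k * dot a b + k * conjc k * nrm2 b.
Proof.
rewrite /nrm2 !dotDl !dotDr !dotZl !dotZr.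
rewrite mulrA; set x := k * _; rewrite -/x. 
by rewrite addrA; congr (_ + _); rewrite addrAC. 
Qed.

End Aux.
Section Spec.
Variable R : realType.
Local Notation C := (R[i]).
Variable n : nat.

Lemma spec_decomp (H : 'M[C]_n.+1) : ctm H = H ->
  exists (P : 'M[C]_n.+1) (d : 'rV[C]_n.+1),
    [/\ P *m ctm P = 1%:M, ctm P *m P = 1%:M & H = ctm P *m diag_mx d *m P].
Proof.
move=> hH.
have Hn : H \is normalmx by apply/normalmxP; rewrite -ctm_tstar hH.
have Pu := spectral_unitarymx H.
exists (spectralmx H), (spectral_diag H).
have e1 : spectralmx H *m ctm (spectralmx H) = 1%:M.
  by rewrite ctm_tstar; apply/unitarymxP.
have e2 : ctm (spectralmx H) = invmx (spectralmx H).
  by rewrite invmx_unitary // ctm_tstar.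
split => //.
  by rewrite e2 mulVmx // unitarymx_unit.
by rewrite e2; apply/orthomx_spectralP.
Qed.

End Spec.
Section Gram.
Variable R : realType.
Local Notation C := (R[i]).
Variable n : nat.

Lemma quad_diag (c : 'rV[C]_n.+1) (d : 'rV[C]_n.+1) :
  (c *m diag_mx d *m ctm c) 0 0 = \sum_j d 0 j * `|c 0 j| ^+ 2.
Proof.
rewrite mul_mx_diag mxE; apply: eq_bigr => j _.
by rewrite !mxE sqr_normc mulrCA mulrA.
Qed.

Lemma gram_struct (B : 'M[C]_n.+1) :
  exists (P : 'M[C]_n.+1) (r : 'I_n.+1 -> R),
    [/\ P *m ctm P = 1%:M, ctm P *m P = 1%:M,
        ctm B *m B = ctm P *m diag_mx (\row_i (r i)%:C) *m P &
        forall i, 0 <= r i].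
Proof.
have [|P [d [e1 e2 eH]]] := @spec_decomp R n (ctm B *m B).
  by rewrite ctmM ctmK.
have dE : forall i, d 0 i = ((P *m ctm B) *m ctm (P *m ctm B)) i i.
  move=> i; rewrite ctmM ctmK !mulmxA -(mulmxA P) eH !mulmxA e1 mul1mx.
  by rewrite -mulmxA e1 mulmx1 mxE eqxx mulr1n.
have dge0 : forall i, 0 <= d 0 i by move=> i; rewrite dE mul_ctm_ge0.
exists P, (fun i => complex.Re (d 0 i)); split => //.
  rewrite eH; congr (_ *m _ *m _); congr diag_mx; apply/rowP => i.
  by rewrite mxE RRe_real // ger0_real.
by move=> i; rewrite -ler0c RRe_real ?dge0 // ger0_real.
Qed.

End Gram.
Section Facts.
Variable R : realType.
Local Notation C := (R[i]).
Variable n : nat.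

Lemma nrm2_0 m : nrm2 (0 : 'rV[C]_m) = 0.
Proof. by rewrite /nrm2 /dot mul0mx mxE. Qed.

Lemma gram_facts (B : 'M[C]_n.+1) :
  [/\ 0 <= inf (gram_eigs B), inf (gram_eigs B) <= sup (gram_eigs B),
   (forall x, nrm2 (x *m ctm B) <= (sup (gram_eigs B))%:C * nrm2 x),
   (forall x, (inf (gram_eigs B))%:C * nrm2 x <= nrm2 (x *m ctm B)) &
  ((exists v, nrm2 v = 1 /\ v *m (ctm B *m B) = (sup (gram_eigs B))%:C *: v) /\
   (exists v, nrm2 v = 1 /\ v *m (ctm B *m B) = (inf (gram_eigs B))%:C *: v))].
Proof.
have [P [r [e1 e2 eH r0]]] := gram_struct B.
set D := diag_mx _ in eH.
have eig_row : forall i, row i P *m (ctm B *m B) = (r i)%:C *: row i P.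
  move=> i; rewrite eH !mulmxA -row_mul e1 row1 rowE.
  rewrite -[delta_mx 0 i *m D]rowE row_diag_mx mxE -scalemxAl.
  by rewrite -rowE.
have nrm_row : forall i, nrm2 (row i P) = 1.
  move=> i; have <- : (P *m ctm P) i i = 1 by rewrite e1 mxE eqxx.
  rewrite /nrm2 /dot !mxE; apply: eq_bigr => k _; rewrite !mxE //.
have gin : forall i, gram_eigs B (r i).
  move=> i; rewrite /gram_eigs /=; apply/eigenvalueP.
  exists (row i P); first exact: eig_row.
  apply/eqP => h; have := nrm_row i; rewrite h nrm2_0 => /eqP.
  by rewrite eq_sym oner_eq0.
have gout : forall x, gram_eigs B x -> exists i, x = r i.
  move=> x; rewrite /gram_eigs /= => /eigenvalueP [v hv vn0].
  pose c := v *m ctm P.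
  have hc : c *m D = x%:C *: c.
    rewrite /c -[_ *m D]mulmx1 -e1 !mulmxA -(mulmxA v) -(mulmxA v) -eH hv.
    by rewrite scalemxAl.
  have vE : v = c *m P by rewrite /c -mulmxA e2 mulmx1.
  have [j cj] : exists j, c 0 j != 0.
    apply/existsP; apply: contraR vn0 => /existsPn h.
    rewrite vE; apply/eqP; apply/rowP => j; rewrite !mxE big1 // => k _.
    by have := h k; rewrite negbK => /eqP ->; rewrite mul0r.
  have h1 : (c *m D) 0 j = c 0 j * (r j)%:C.
    by rewrite /D mul_mx_diag [in LHS]mxE [(\row__ _) 0 j]mxE.
  have h2 : (x%:C *: c) 0 j = c 0 j * x%:C by rewrite mxE mulrC.
  have := congr1 (fun M : 'rV_n.+1 => M 0 j) hc.
  rewrite /= h1 h2 => /(mulfI cj) /complexI <-.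
  by exists j.
have [imax _ Hmax] : extremum_spec >=%O xpredT r [arg max_(i > ord0) r i]%O.
  exact: arg_maxP.
have [imin _ Hmin] : extremum_spec <=%O xpredT r [arg min_(i < ord0) r i]%O.
  exact: arg_minP.
have supE : sup (gram_eigs B) = r imax.
  apply/eqP; rewrite eq_le; apply/andP; split.
    apply: ge_sup; first by exists (r imax).
    by move=> y /gout [j ->]; exact: Hmax.
  apply: ub_le_sup (gin imax).
  by exists (r imax) => y /gout [j ->]; exact: Hmax.
have infE : inf (gram_eigs B) = r imin.
  apply/eqP; rewrite eq_le; apply/andP; split.
    apply: ge_inf (gin imin).
    by exists (r imin) => y /gout [j ->]; exact: Hmin.
  apply: lb_le_inf; first by exists (r imin).
  by move=> y /gout [j ->]; exact: Hmin.
have quadE : forall x : 'rV_n.+1, nrm2 (x *m ctm B) =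
    \sum_j (r j)%:C * `|(x *m ctm P) 0 j| ^+ 2.
  move=> x; rewrite /nrm2 /dot ctmM ctmK mulmxA -(mulmxA x) eH.
  rewrite !mulmxA -[x *m ctm P *m D *m P *m ctm x]mulmxA.
  have -> : P *m ctm x = ctm (x *m ctm P) by rewrite ctmM ctmK.
  by rewrite quad_diag; apply: eq_bigr => j _; rewrite mxE.
have nrmE : forall x : 'rV_n.+1, nrm2 x = \sum_j `|(x *m ctm P) 0 j| ^+ 2.
  move=> x; rewrite -mul_ctm_diag ctmM ctmK mulmxA -(mulmxA x) e2 mulmx1 //.
rewrite supE infE; split.
- by apply: r0.
- by apply: Hmin.
- move=> x; rewrite quadE nrmE mulr_sumr; apply: ler_sum => j _.
  by rewrite ler_wpM2r ?exprn_ge0 // lecR; apply: Hmax.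
- move=> x; rewrite quadE nrmE mulr_sumr; apply: ler_sum => j _.
  by rewrite ler_wpM2r ?exprn_ge0 // lecR; apply: Hmin.
- split; [exists (row imax P) | exists (row imin P)]; by rewrite nrm_row eig_row.
Qed.

End Facts.
Section Sums.
Variable R : realType.
Local Notation C := (R[i]).

Lemma sum_expand m (a b : 'rV[C]_m) (ks : seq C) :
  \sum_(k <- ks) k = 0 ->
  \sum_(k <- ks) nrm2 (a + k *: b) =
    (size ks)%:R * nrm2 a + (\sum_(k <- ks) `|k| ^+ 2) * nrm2 b.
Proof.
move=> hs.
under eq_bigr => k _ do rewrite nrm2_expand -[k * conjc k]/(k * Num.conj k) -normCK.
rewrite !big_split /= -!mulr_suml hs mul0r addr0.
have -> : \sum_(k <- ks) conjc k = 0.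
  by rewrite -[\sum_(i <- ks) conjc i]/(\sum_(i <- ks) Num.conj i) -rmorph_sum /= hs rmorph0.
by rewrite mul0r addr0 big_const_seq count_predT iter_addr_0 mulr_natl.
Qed.

End Sums.
Section Resolv.
Variable R : realType.
Local Notation C := (R[i]).
Variable n : nat.
Variable A : 'M[C]_n.+1.

Lemma unit_of z : ~ eigenvalue A z -> (A - z%:M) \in unitmx.
Proof.
move=> h; rewrite -row_free_unit -kermx_eq0; apply/negPn/negP => h'; apply: h.
exact: h'.
Qed.

Lemma ctmB_z z : ctm (A - z%:M) = ctm A - (conjc z)%:M.
Proof. by rewrite ctmB ctm_scalar. Qed.

Lemma ctm_res_l z : ~ eigenvalue A z ->
  ctm (A - z%:M) *m ctm (resolvent A z) = 1%:M.
Proof.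
by move=> h; rewrite -ctmM /resolvent mulVmx ?ctm1 // unit_of.
Qed.

Lemma ctm_res_r z : ~ eigenvalue A z ->
  ctm (resolvent A z) *m ctm (A - z%:M) = 1%:M.
Proof.
by move=> h; rewrite -ctmM /resolvent mulmxV ?ctm1 // unit_of.
Qed.

Lemma ctm_res_unit z : ~ eigenvalue A z -> ctm (resolvent A z) \in unitmx.
Proof.
move=> h; apply: (@intro_unitmx _ _ _ (ctm (A - z%:M))); split.
  exact: ctm_res_l.
exact: ctm_res_r.
Qed.

End Resolv.
Section CoreMin.
Variable R : realType.
Local Notation C := (R[i]).
Variable n : nat.
Variable A : 'M[C]_n.+1.

Lemma ball_pt (Omega : set C) z0 (e : C) :
  ball_ Num.norm z0 e `<=` Omega -> forall eps : C, `|eps| < e -> Omega (z0 + conjc eps).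
Proof.
move=> sub eps h; apply: sub; rewrite /ball_ /= opprD addrA subrr add0r normrN.
by rewrite normcJ.
Qed.

Lemma ctm_shift z0 eps :
  ctm (A - (z0 + conjc eps)%:M) = ctm (A - z0%:M) - eps%:M.
Proof.
by rewrite !ctmB_z rmorphD /= conjcK raddfD /= opprD addrA.
Qed.

Lemma pos_radius (e : C) : 0 < e -> exists t : R, 0 < t /\ t%:C < e.
Proof.
move=> e0; have er : e \is Num.real by apply: gtr0_real.
have <- := RRe_real er; move: e0; rewrite -(RRe_real er) ltcR => e0.
by exists (complex.Re e / 2); split; [lra | rewrite ltcR; lra].
Qed.

End CoreMin.
Section CoreMin2.
Variable R : realType.
Local Notation C := (R[i]).
Variable n : nat.
Variable A : 'M[C]_n.+1.

Lemma core_min (Omega : set C) : open Omega ->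
  (forall z, Omega z -> ~ eigenvalue A z) -> forall z0, Omega z0 ->
  exists z, Omega z /\
    inf (gram_eigs (resolvent A z)) < inf (gram_eigs (resolvent A z0)).
Proof.
move=> oO hsp z0 Oz0.
case: (pselect (exists z, Omega z /\
    inf (gram_eigs (resolvent A z)) < inf (gram_eigs (resolvent A z0)))) => // Hn.
exfalso.
set m2 := inf (gram_eigs (resolvent A z0)).
have Hge : forall z, Omega z -> m2 <= inf (gram_eigs (resolvent A z)).
  move=> z Oz; rewrite leNgt; apply/negP => h; apply: Hn; by exists z.
have [e /= e0 sub] := oO z0 Oz0.
have [m0 _ _ _ [_ [v [v1 hv]]]] := gram_facts (resolvent A z0).
set S0 := ctm (resolvent A z0).
set B0c := ctm (A - z0%:M).
have hz0 := hsp z0 Oz0.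
set y := v *m S0.
have yB : y *m B0c = v by rewrite /y -mulmxA ctm_res_r // mulmx1.
have ny : nrm2 y = m2%:C.
  rewrite /nrm2 {1}/y dot_mulmx /y ctmK -mulmxA hv dotZr conjc_real.
  by rewrite -/(nrm2 v) v1 mulr1.
have m2pos : 0 < m2.
  rewrite lt0r m0 andbT; apply/eqP => h0.
  have : nrm2 y = 0 by rewrite ny h0.
  move/nrm2_eq0 => y0; move: v1; rewrite -yB y0 mul0mx nrm2_0 => /eqP.
  by rewrite eq_sym oner_eq0.
have key : forall eps : C, `|eps| < e ->
    m2%:C * nrm2 (v + eps *: y) <= m2%:C.
  move=> eps he; have he' : `|- eps| < e by rewrite normrN.
  have Oz := ball_pt sub he'.
  set z := z0 + conjc (- eps) in Oz.
  have hz := hsp z Oz.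
  have [_ _ _ Hlow _] := gram_facts (resolvent A z).
  set x := y *m ctm (A - z%:M).
  have xE : x = v + eps *: y.
    by rewrite /x ctm_shift -/B0c mulmxBr yB mul_mx_scalar scaleNr opprK.
  have xS : x *m ctm (resolvent A z) = y.
    by rewrite /x -mulmxA ctm_res_l // mulmx1.
  have h2 := Hlow x; rewrite xS ny in h2; apply: le_trans h2.
  rewrite -xE; apply: ler_wpM2r; first exact: nrm2_ge0.
  rewrite lecR; exact: Hge.
have [t [t0 te]] := pos_radius e0.
set tc := t%:C.
have tc0 : 0 < tc by rewrite ltcR.
have hsum : \sum_(k <- [:: tc; - tc]) m2%:C * nrm2 (v + k *: y) <=
            \sum_(k <- [:: tc; - tc]) m2%:C.
  rewrite big_seq [X in _ <= X]big_seq; apply: ler_sum => k; rewrite !inE => /orP [] /eqP ->; apply: key.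
    by rewrite ger0_norm ?ltW.
  by rewrite normrN ger0_norm ?ltW.
move: hsum; rewrite -mulr_sumr sum_expand; last first.
  by rewrite !big_cons big_nil addr0 subrr.
rewrite !big_cons !big_nil v1 ny /= normrN !addr0.
set T := `|tc| ^+ 2.
have T0 : 0 < T by rewrite exprn_gt0 // normr_gt0 gt_eqF.
have m2c0 : 0 < m2%:C by rewrite ltcR.
move=> h; have : 0 <= (m2%:C + m2%:C) - m2%:C * (2%:R * 1 + (T + T) * m2%:C).
  by rewrite subr_ge0.
have -> : (m2%:C + m2%:C) - m2%:C * (2%:R * 1 + (T + T) * m2%:C) =
          - (2%:R * T * (m2%:C * m2%:C)) by ring.
have pos : 0 < 2%:R * T * (m2%:C * m2%:C).
  have two : (0 : C) < 2%:R by rewrite ltr0n.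
  by apply: mulr_gt0; [apply: mulr_gt0 | apply: mulr_gt0].
by rewrite oppr_ge0 (lt_geF pos).
Qed.

End CoreMin2.
Section Rad.
Variable R : realType.
Local Notation C := (R[i]).
Lemma pos_radius2 (e : C) (M : R) : 0 < e -> 0 <= M ->
  exists t : R, [/\ 0 < t, t%:C < e & M * t ^+ 2 < 1].
Proof.
move=> e0 M0; have [t0 [t00 t0e]] := pos_radius e0.
pose t := Num.min t0 (1 / (M + 1)).
have M1 : 0 < M + 1 by lra.
have ht0 : 0 < t by rewrite lt_min t00 divr_gt0.
have ht1 : t <= t0 by rewrite ge_min lexx.
have ht2 : t * (M + 1) <= 1.
  have : t <= 1 / (M + 1) by rewrite ge_min lexx orbT.
  by rewrite ler_pdivlMr // mul1r.
exists t; split => //.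
  by apply: le_lt_trans t0e; rewrite lecR.
nra.
Qed.
End Rad.
Section CoreMax.
Variable R : realType.
Local Notation C := (R[i]).
Variable n : nat.
Variable A : 'M[C]_n.+1.

Lemma vec_alg (v y p : 'rV[C]_n.+1) (eps : C) :
  v - eps *: y + (eps *: y - eps *: (eps *: p)) = v + (- eps ^+ 2) *: p.
Proof. by rewrite addrA subrK scalerA -expr2 scaleNr. Qed.

Lemma core_max (Omega : set C) : open Omega ->
  (forall z, Omega z -> ~ eigenvalue A z) -> forall z0, Omega z0 ->
  exists z, Omega z /\
    sup (gram_eigs (resolvent A z0)) < sup (gram_eigs (resolvent A z)).
Proof.
move=> oO hsp z0 Oz0.
case: (pselect (exists z, Omega z /\
    sup (gram_eigs (resolvent A z0)) < sup (gram_eigs (resolvent A z)))) => // Hn.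
exfalso.
set M2 := sup (gram_eigs (resolvent A z0)).
have Hle : forall z, Omega z -> sup (gram_eigs (resolvent A z)) <= M2.
  move=> z Oz; rewrite leNgt; apply/negP => h; apply: Hn; by exists z.
have [e /= e0 sub] := oO z0 Oz0.
have [m0 mM _ _ [[v [v1 hv]] _]] := gram_facts (resolvent A z0).
have M0 : 0 <= M2 := le_trans m0 mM.
set S0 := ctm (resolvent A z0).
set B0c := ctm (A - z0%:M).
have hz0 := hsp z0 Oz0.
set y := v *m S0.
have yB : y *m B0c = v by rewrite /y -mulmxA ctm_res_r // mulmx1.
have ny : nrm2 y = M2%:C.
  rewrite /nrm2 {1}/y dot_mulmx /y ctmK -mulmxA hv dotZr conjc_real.
  by rewrite -/(nrm2 v) v1 mulr1.
set p := y *m S0.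
have pB : p *m B0c = y by rewrite /p -mulmxA ctm_res_r // mulmx1.
have key : forall eps : C, `|eps| < e -> forall u w : 'rV[C]_n.+1,
    u = y + eps *: p -> w = v + (- eps ^+ 2) *: p ->
    nrm2 u <= M2%:C * nrm2 w.
  move=> eps he u w hu hw; have Oz := ball_pt sub he.
  set z := z0 + conjc eps in Oz.
  have hz := hsp z Oz.
  have [_ _ Hup _ _] := gram_facts (resolvent A z).
  pose x := u *m ctm (A - z%:M).
  have xE : x = w.
    rewrite /x hu hw ctm_shift -/B0c mulmxDl !mulmxBr -(scalemxAl eps p B0c) pB yB.
    rewrite !mul_mx_scalar; exact: vec_alg.
  have xS : x *m ctm (resolvent A z) = u.
    by rewrite /x -mulmxA ctm_res_l // mulmx1.
  have h2 := Hup x. rewrite xS in h2. rewrite xE in h2. apply: (le_trans h2).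
  apply: ler_wpM2r. exact: nrm2_ge0.
  have hl := Hle z Oz. rewrite lecR. exact: hl.
have [t [t0 te tM]] := pos_radius2 e0 M0.
set tc := t%:C.
have tc0 : 0 < tc by rewrite ltcR.
have ntc : `|tc| = tc by rewrite ger0_norm // ltW.
set ks := [:: tc; - tc; tc * 'i%R; - (tc * 'i%R)].
have nks : forall k, k \in ks -> `|k| = tc.
  move=> k; rewrite !inE => /or4P [] /eqP ->;
  by rewrite ?normrN ?normrM ?normCi ?mulr1.
have hsum : \sum_(k <- ks) nrm2 (y + k *: p) <=
            \sum_(k <- ks) M2%:C * nrm2 (v + (- k ^+ 2) *: p).
  rewrite big_seq [X in _ <= X]big_seq; apply: ler_sum => k kin.
  by apply: key => //; rewrite nks.
have eqm : \sum_(k <- ks) nrm2 (v + (- k ^+ 2) *: p) =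
    \sum_(j <- map (fun k => - k ^+ 2) ks) nrm2 (v + j *: p) by rewrite big_map.
have s1 : \sum_(k <- ks) `|k| ^+ 2 = 4%:R * tc ^+ 2.
  rewrite /ks !big_cons big_nil !normrN normrM normCi mulr1 ntc; ring.
have s2 : \sum_(j <- map (fun k => - k ^+ 2) ks) `|j| ^+ 2 = 4%:R * tc ^+ 4.
  rewrite /ks /= !big_cons big_nil !(normrN, normrX, normrM, normCi, mulr1, ntc).
  ring.
move: hsum; rewrite -mulr_sumr eqm sum_expand; last first.
  by rewrite /ks !big_cons big_nil; ring.
rewrite sum_expand; last first.
  rewrite /ks /= !big_cons big_nil !sqrrN !exprMn !sqrCi; ring.
rewrite s1 s2 v1 ny /=.
set P := nrm2 p => h.
have : 0 <= M2%:C * (4%:R * 1 + 4%:R * tc ^+ 4 * P) -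
            (4%:R * M2%:C + 4%:R * tc ^+ 2 * P) by rewrite subr_ge0.
have -> : M2%:C * (4%:R * 1 + 4%:R * tc ^+ 4 * P) -
            (4%:R * M2%:C + 4%:R * tc ^+ 2 * P) =
          - ((4%:R * tc ^+ 2 * (1 - M2%:C * tc ^+ 2)) * P) by ring.
have K0 : 0 < 4%:R * tc ^+ 2 * (1 - M2%:C * tc ^+ 2).
  have four : (0 : C) < 4%:R by rewrite ltr0n.
  have -> : 1 - M2%:C * tc ^+ 2 = (1 - M2 * t ^+ 2)%:C.
    by rewrite rmorphB rmorph1 rmorphM rmorphXn.
  have h1 : (0 : C) < (1 - M2 * t ^+ 2)%:C by rewrite ltcR; lra.
  by apply: mulr_gt0 => //; apply: mulr_gt0 => //; apply: exprn_gt0.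
rewrite oppr_ge0 (pmulr_rle0 _ K0) => P0.
have P00 : P = 0 by apply/eqP; rewrite eq_le P0 nrm2_ge0.
move: v1; rewrite -yB -pB (nrm2_eq0 P00) !mul0mx nrm2_0 => /eqP.
by rewrite eq_sym oner_eq0.
Qed.

End CoreMax.

Theorem theorem12 (R : realType) (n : nat) (hn : (0 < n)%N)
    (A : 'M[R[i]]_n) (Omega : set R[i])
    (hOmega : region Omega) (hsub : Omega `<=` ~` spectrum A) :
  (forall z, Omega z ->
     ((s_first (resolvent A z))%:E
        < ereal_sup [set (s_first (resolvent A zeta))%:E | zeta in Omega])%E
     /\
     (ereal_inf [set (s_last (resolvent A zeta))%:E | zeta in Omega]
        < (s_last (resolvent A z))%:E)%E)
  /\ (exists z1 z2, Omega z1 /\ Omega z2 /\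
        s_first (resolvent A z1) <> s_first (resolvent A z2))
  /\ (exists z1 z2, Omega z1 /\ Omega z2 /\
        s_last (resolvent A z1) <> s_last (resolvent A z2)).
Proof.
case: n hn A Omega hOmega hsub => [//|n] _ A Omega [[w0 Ow0] [oO _]] hsub.
have hsp : forall z, Omega z -> ~ eigenvalue A z.
  by move=> z Oz; exact: (hsub z Oz).
have sf : forall z, Omega z -> exists z', Omega z' /\
    s_first (resolvent A z) < s_first (resolvent A z').
  move=> z Oz; have [z' [Oz' h]] := core_max oO hsp Oz.
  exists z'; split => //; rewrite /s_first ltr_sqrt //; apply: le_lt_trans h.
  by have [m0 mM _ _ _] := gram_facts (resolvent A z); exact: le_trans m0 mM.
have sl : forall z, Omega z -> exists z', Omega z' /\
    s_last (resolvent A z') < s_last (resolvent A z).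
  move=> z Oz; have [z' [Oz' h]] := core_min oO hsp Oz.
  exists z'; split => //; rewrite /s_last ltr_sqrt //; apply: le_lt_trans h.
  by have [m0 _ _ _ _] := gram_facts (resolvent A z'); exact: m0.
split; [|split].
- move=> z Oz; split.
  + have [z' [Oz' h]] := sf z Oz.
    apply: (@lt_le_trans _ _ (s_first (resolvent A z'))%:E); first by rewrite lte_fin.
    by apply: ereal_sup_ubound; exists z'.
  + have [z' [Oz' h]] := sl z Oz.
    apply: (@le_lt_trans _ _ (s_last (resolvent A z'))%:E); last by rewrite lte_fin.
    by apply: ereal_inf_lbound; exists z'.
- have [z' [Oz' h]] := sf w0 Ow0.
  exists w0, z'; split; first exact: Ow0.
  split; first exact: Oz'.
  by move=> e; move: h; rewrite e ltxx.
- have [z' [Oz' h]] := sl w0 Ow0.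
  exists w0, z'; split; first exact: Ow0.
  split; first exact: Oz'.
  by move=> e; move: h; rewrite e ltxx.
Qed.
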